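(* For $k\ge 0$ let $p_k(x)=\sqrt{(k+1)/\pi}\,x^k$ (the Bergman orthonormal polynomials of the unit disk), and for $n\ge 0$ define, for $x\in\mathbb{R}$, $$K_n(x,x)=\sum_{k=0}^np_k(x)^2,\quad K_n^{(0,1)}(x,x)=\sum_{k=0}^np_k(x)p_k'(x),\quad K_n^{(1,1)}(x,x)=\sum_{k=0}^np_k'(x)^2,$$ $$\mathcal K_n(x)=\frac{\sqrt{K_n^{(1,1)}(x,x)K_n(x,x)-(K_n^{(0,1)}(x,x))^2}}{K_n(x,x)}.$$ Then $$\lim_{n\to\infty}\mathcal K_n(x)=\begin{cases}\dfrac{\sqrt2}{1-x^2}, & |x|<1,\\[1ex] \dfrac{1}{x^2-1}, & |x|>1,\end{cases}$$ where the convergence holds locally uniformly on $(-1,1)$ and on $\{x\in\mathbb{R}:|x|>1\}$; moreover $$\mathcal K_n(\pm1)=\frac13\sqrt{\frac{n(n+3)}{2}}.$$ *)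

(* Defs.v *)
From Stdlib Require Import Reals.
From Coquelicot Require Import Coquelicot.
Open Scope R_scope.

Definition p (k : nat) (x : R) : R := sqrt (INR (k + 1) / PI) * x ^ k.

Definition dp (k : nat) (x : R) : R := Derive (p k) x.

Definition Kn (n : nat) (x : R) : R := sum_f_R0 (fun k => p k x ^ 2) n.
Definition Kn01 (n : nat) (x : R) : R := sum_f_R0 (fun k => p k x * dp k x) n.
Definition Kn11 (n : nat) (x : R) : R := sum_f_R0 (fun k => dp k x ^ 2) n.

Definition calK (n : nat) (x : R) : R :=
  sqrt (Kn11 n x * Kn n x - (Kn01 n x) ^ 2) / Kn n x.

Definition Klim (x : R) : R :=
  if Rlt_dec (Rabs x) 1 then sqrt 2 / (1 - x ^ 2) else 1 / (x ^ 2 - 1).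

Definition unif_cv_on (f : nat -> R -> R) (g : R -> R) (S : R -> Prop) : Prop :=
  forall eps, 0 < eps -> exists N : nat, forall n x, (N <= n)%nat -> S x ->
    Rabs (f n x - g x) < eps.

Definition loc_unif_cv_on (f : nat -> R -> R) (g : R -> R) (U : R -> Prop) : Prop :=
  forall a b, (forall x, a <= x <= b -> U x) ->
    unif_cv_on f g (fun x => a <= x <= b).

(* Main.v *)
Require Import Defs.
From Stdlib Require Import Reals Lra Lia Psatz ZArith List.
From Coquelicot Require Import Coquelicot.
Import ListNotations.
Open Scope R_scope.


Lemma dp_eq k x : dp k x = sqrt (INR (k + 1) / PI) * (INR k * x ^ (k - 1)).
Proof.
  unfold dp, p. apply is_derive_unique. auto_derive; auto.
  destruct k; simpl; [ring|]. rewrite Nat.sub_0_r. ring.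
Qed.

Lemma csq k : sqrt (INR (k + 1) / PI) ^ 2 = INR (k + 1) / PI.
Proof. apply pow2_sqrt. apply Rdiv_le_0_compat. apply pos_INR. apply PI_RGT_0. Qed.

Lemma xpow_aux j x : x ^ j * x ^ S j = x * (x ^ 2) ^ j.
Proof. rewrite <- pow_mult. replace (2 * j)%nat with (j + j)%nat by lia. rewrite pow_add. simpl. ring. Qed.

Lemma term0 k x : p k x ^ 2 = / PI * (INR (k + 1) * (x ^ 2) ^ k).
Proof.
  unfold p. rewrite Rpow_mult_distr, csq, <- !pow_mult, Nat.mul_comm. unfold Rdiv. ring.
Qed.

Lemma term01 k x : p k x * dp k x = / PI * (x * (INR k * INR (k + 1) * (x ^ 2) ^ (k - 1))).
Proof.
  rewrite dp_eq. unfold p.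
  transitivity (sqrt (INR (k + 1) / PI) ^ 2 * INR k * (x ^ (k - 1) * x ^ k)); [ring|].
  rewrite csq. destruct k as [|j]. { simpl. ring. }
  replace (S j - 1)%nat with j by lia. rewrite xpow_aux. unfold Rdiv. ring.
Qed.

Lemma term11 k x : dp k x ^ 2 = / PI * (INR k ^ 2 * INR (k + 1) * (x ^ 2) ^ (k - 1)).
Proof.
  rewrite dp_eq. rewrite !Rpow_mult_distr, csq. rewrite <- pow_mult.
  replace ((k-1)*2)%nat with (2*(k-1))%nat by lia. rewrite pow_mult. unfold Rdiv. ring.
Qed.

Lemma sum_scal c f n : sum_f_R0 (fun k => c * f k) n = c * sum_f_R0 f n.
Proof. induction n; simpl; [ring|]. rewrite IHn. ring. Qed.

Definition As n t := sum_f_R0 (fun k => INR (k + 1) * t ^ k) n.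
Definition Ps n t := sum_f_R0 (fun k => INR k * INR (k + 1) * t ^ (k - 1)) n.
Definition Qs n t := sum_f_R0 (fun k => INR k ^ 2 * INR (k + 1) * t ^ (k - 1)) n.

Lemma Kn_eq n x : Kn n x = / PI * As n (x ^ 2).
Proof. unfold Kn, As. rewrite <- sum_scal. apply sum_eq. intros; apply term0. Qed.
Lemma Kn01_eq n x : Kn01 n x = / PI * (x * Ps n (x ^ 2)).
Proof. unfold Kn01, Ps. rewrite <- sum_scal, <- sum_scal. apply sum_eq. intros; rewrite term01; ring. Qed.
Lemma Kn11_eq n x : Kn11 n x = / PI * Qs n (x ^ 2).
Proof. unfold Kn11, Qs. rewrite <- sum_scal. apply sum_eq. intros; apply term11. Qed.

Lemma As_ge1 n t : 0 <= t -> 1 <= As n t.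
Proof.
  intros Ht. induction n; unfold As in *.
  - simpl. lra.
  - change (1 <= sum_f_R0 (fun k => INR (k + 1) * t ^ k) n + INR (S n + 1) * t ^ S n).
    assert (0 <= INR (S n + 1) * t ^ S n) by (apply Rmult_le_pos; [apply pos_INR| apply pow_le; auto]). lra.
Qed.

Lemma calK_eq n x : calK n x =
  sqrt (Qs n (x^2) * As n (x^2) - x^2 * Ps n (x^2) ^ 2) / As n (x^2).
Proof.
  unfold calK. rewrite Kn_eq, Kn01_eq, Kn11_eq.
  assert (HP := PI_RGT_0).
  assert (HA : 1 <= As n (x^2)) by (apply As_ge1; apply pow2_ge_0).
  replace (/ PI * Qs n (x ^ 2) * (/ PI * As n (x ^ 2)) - (/ PI * (x * Ps n (x ^ 2))) ^ 2)
    with ((/PI) ^ 2 * (Qs n (x^2) * As n (x^2) - x^2 * Ps n (x^2) ^ 2)) by ring.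
  rewrite sqrt_mult_alt by (apply pow2_ge_0).
  rewrite sqrt_pow2 by (left; apply Rinv_0_lt_compat; auto).
  field. split; lra.
Qed.


Definition At n t := let m := INR n in let S := t ^ n in
  (1) + (-2)*t^1*S^1 + (1)*t^2*S^1 + (-1)*m^1*t^1*S^1 + (1)*m^1*t^2*S^1.
Definition Pt n t := let m := INR n in let S := t ^ n in
  (2) + (-2)*S^1 + (-3)*m^1*S^1 + (4)*m^1*t^1*S^1 + (-1)*m^1*t^2*S^1 + (-1)*m^2*S^1 + (2)*m^2*t^1*S^1 + (-1)*m^2*t^2*S^1.
Definition Qt n t := let m := INR n in let S := t ^ n in
  (2) + (-2)*S^1 + (4)*t^1 + (-4)*t^1*S^1 + (-5)*m^1*S^1 + (4)*m^1*t^1*S^1 + (1)*m^1*t^2*S^1 + (-4)*m^2*S^1 + (9)*m^2*t^1*S^1 + (-6)*m^2*t^2*S^1 + (1)*m^2*t^3*S^1 + (-1)*m^3*S^1 + (3)*m^3*t^1*S^1 + (-3)*m^3*t^2*S^1 + (1)*m^3*t^3*S^1.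

Lemma As_closed n t : As n t * (1 - t) ^ 2 = At n t.
Proof.
  induction n.
  - unfold As, At; simpl; ring.
  - change (As (S n) t) with (As n t + INR (S n + 1) * t ^ S n).
    unfold At in *; cbv zeta in *. rewrite Rmult_plus_distr_r, IHn.
    rewrite plus_INR, !S_INR. simpl pow. simpl INR. ring.
Qed.

Lemma Ps_closed n t : Ps n t * (1 - t) ^ 3 = Pt n t.
Proof.
  induction n.
  - unfold Ps, Pt; simpl; ring.
  - change (Ps (S n) t) with (Ps n t + INR (S n) * INR (S n + 1) * t ^ (S n - 1)).
    unfold Pt in *; cbv zeta in *. rewrite Rmult_plus_distr_r, IHn.
    replace (S n - 1)%nat with n by lia.
    rewrite plus_INR, !S_INR. simpl pow. simpl INR. ring.
Qed.

Lemma Qs_closed n t : Qs n t * (1 - t) ^ 4 = Qt n t.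
Proof.
  induction n.
  - unfold Qs, Qt; simpl; ring.
  - change (Qs (S n) t) with (Qs n t + INR (S n) ^ 2 * INR (S n + 1) * t ^ (S n - 1)).
    unfold Qt in *; cbv zeta in *. rewrite Rmult_plus_distr_r, IHn.
    replace (S n - 1)%nat with n by lia.
    rewrite plus_INR, !S_INR. simpl pow. simpl INR. ring.
Qed.

Definition mon (m t S : R) (c : Z * nat * nat * nat) : R :=
  let '(z, a, b, d) := c in IZR z * m ^ a * t ^ b * S ^ d.
Definition peval (l : list (Z * nat * nat * nat)) m t S :=
  fold_right (fun c acc => mon m t S c + acc) 0 l.
Definition sabs (l : list (Z * nat * nat * nat)) : Z :=
  fold_right (fun c acc => (Z.abs (fst (fst (fst c))) + acc)%Z) 0%Z l.
Definition degok da db (l : list (Z * nat * nat * nat)) : bool :=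
  forallb (fun c => let '(z, a, b, d) := c in andb (Nat.leb a da) (Nat.leb b db)) l.

Definition L1 : list (Z * nat * nat * nat) := [((-2)%Z,0%nat,0%nat,0%nat); ((8)%Z,0%nat,1%nat,0%nat); ((-10)%Z,0%nat,2%nat,0%nat); ((-2)%Z,0%nat,2%nat,1%nat); ((4)%Z,0%nat,3%nat,0%nat); ((4)%Z,0%nat,3%nat,1%nat); ((-2)%Z,0%nat,4%nat,1%nat); ((-5)%Z,1%nat,0%nat,0%nat); ((18)%Z,1%nat,1%nat,0%nat); ((-21)%Z,1%nat,2%nat,0%nat); ((-3)%Z,1%nat,2%nat,1%nat); ((8)%Z,1%nat,3%nat,0%nat); ((6)%Z,1%nat,3%nat,1%nat); ((-3)%Z,1%nat,4%nat,1%nat); ((-4)%Z,2%nat,0%nat,0%nat); ((13)%Z,2%nat,1%nat,0%nat); ((-14)%Z,2%nat,2%nat,0%nat); ((-1)%Z,2%nat,2%nat,1%nat); ((5)%Z,2%nat,3%nat,0%nat); ((2)%Z,2%nat,3%nat,1%nat); ((-1)%Z,2%nat,4%nat,1%nat); ((-1)%Z,3%nat,0%nat,0%nat); ((3)%Z,3%nat,1%nat,0%nat); ((-3)%Z,3%nat,2%nat,0%nat); ((1)%Z,3%nat,3%nat,0%nat)].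
Definition L20 : list (Z * nat * nat * nat) := [((2)%Z,0%nat,2%nat,0%nat); ((-1)%Z,0%nat,4%nat,0%nat); ((1)%Z,1%nat,2%nat,0%nat); ((-1)%Z,1%nat,4%nat,0%nat)].
Definition L21 : list (Z * nat * nat * nat) := [((-2)%Z,0%nat,0%nat,0%nat); ((4)%Z,0%nat,1%nat,0%nat); ((-8)%Z,0%nat,2%nat,0%nat); ((4)%Z,0%nat,3%nat,0%nat); ((-5)%Z,1%nat,0%nat,0%nat); ((16)%Z,1%nat,1%nat,0%nat); ((-19)%Z,1%nat,2%nat,0%nat); ((8)%Z,1%nat,3%nat,0%nat); ((-4)%Z,2%nat,0%nat,0%nat); ((13)%Z,2%nat,1%nat,0%nat); ((-14)%Z,2%nat,2%nat,0%nat); ((5)%Z,2%nat,3%nat,0%nat); ((-1)%Z,3%nat,0%nat,0%nat); ((3)%Z,3%nat,1%nat,0%nat); ((-3)%Z,3%nat,2%nat,0%nat); ((1)%Z,3%nat,3%nat,0%nat)].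

Lemma id1 n t : Qt n t * At n t - t * Pt n t ^ 2 - 2 * At n t ^ 2 =
  t ^ n * peval L1 (INR n) t (t ^ n).
Proof. unfold Qt, At, Pt, peval, L1, mon. cbv zeta. simpl fold_right. ring. Qed.

Lemma id2 n t : Qt n t * At n t - t * Pt n t ^ 2 - At n t ^ 2 =
  1 + t ^ n * peval L21 (INR n) t 1 + (t ^ n) ^ 2 * peval L20 (INR n) t 1.
Proof. unfold Qt, At, Pt, peval, L20, L21, mon. cbv zeta. simpl fold_right. ring. Qed.

Lemma sabs_vals : sabs L1 = 144%Z /\ sabs L20 = 5%Z /\ sabs L21 = 110%Z.
Proof. vm_compute. auto. Qed.
Lemma deg_vals : degok 3 4 L1 = true /\ degok 1 4 L20 = true /\ degok 3 3 L21 = true.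
Proof. vm_compute. auto. Qed.
Lemma peval_bound l m t S Mt da db : 0 <= m -> 1 <= Mt -> Rabs t <= Mt -> Rabs S <= 1 ->
  degok da db l = true -> Rabs (peval l m t S) <= IZR (sabs l) * ((m + 1) ^ da * Mt ^ db).
Proof.
  intros Hm HM Ht HS. induction l as [|[[[z a] b] d] l IH]; simpl.
  - intros _. rewrite Rabs_R0. lra.
  - intros H. apply andb_prop in H as [H1 H]. apply andb_prop in H1 as [Ha Hb].
    apply Nat.leb_le in Ha, Hb. specialize (IH H).
    rewrite plus_IZR, Rmult_plus_distr_r.
    eapply Rle_trans; [apply Rabs_triang|]. apply Rplus_le_compat; [|exact IH].
    rewrite !Rabs_mult, <- !RPow_abs, abs_IZR.
    assert (0 <= Rabs (IZR z)) by apply Rabs_pos.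
    assert (E1 : Rabs m ^ a <= (m+1) ^ da).
    { rewrite Rabs_pos_eq by lra. apply Rle_trans with ((m+1)^a).
      apply pow_incr; lra. apply Rle_pow; [lra|lia]. }
    assert (E2 : Rabs t ^ b <= Mt ^ db).
    { apply Rle_trans with (Mt^b). apply pow_incr; split; [apply Rabs_pos|lra].
      apply Rle_pow; [lra|lia]. }
    assert (E3 : Rabs S ^ d <= 1).
    { rewrite <- (pow1 d). apply pow_incr. split; [apply Rabs_pos|lra]. }
    assert (0 <= Rabs m ^ a) by (apply pow_le, Rabs_pos).
    assert (0 <= Rabs t ^ b) by (apply pow_le, Rabs_pos).
    assert (0 <= Rabs S ^ d) by (apply pow_le, Rabs_pos).
    apply Rle_trans with (Rabs (IZR z) * (m + 1) ^ da * Mt ^ db * 1).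
    { repeat apply Rmult_le_compat; try assumption; try lra;
        repeat apply Rmult_le_pos; try assumption; try lra. }
    lra.
Qed.


Definition ev_small (E : nat -> R) := forall eps, 0 < eps -> exists N, forall n, (N <= n)%nat -> E n < eps.

Lemma bern h n : 0 <= h -> 1 + INR n * h <= (1 + h) ^ n.
Proof.
  intros Hh. induction n.
  - simpl. lra.
  - rewrite S_INR. simpl pow.
    assert (0 <= INR n * h) by (apply Rmult_le_pos; [apply pos_INR|lra]).
    nra.
Qed.

Lemma lin_bound r : 0 <= r < 1 -> exists B, forall n, 0 <= (INR n + 1) * r ^ n <= B.
Proof.
  intros Hr. set (r' := Rmax r (1/2)).
  assert (Hr1 : r <= r') by apply Rmax_l.
  assert (Hr2 : 1/2 <= r') by apply Rmax_r.
  assert (Hr3 : r' < 1) by (unfold r'; apply Rmax_lub_lt; lra).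
  set (h := / r' - 1).
  assert (Hh : 0 < h).
  { unfold h. assert (1 < / r'). { rewrite <- Rinv_1. apply Rinv_lt_contravar; lra. } lra. }
  exists (1 + / h). intros n.
  assert (E1 : r' * (1 + h) = 1) by (unfold h; field; lra).
  assert (E2 : r' ^ n * (1 + h) ^ n = 1) by (rewrite <- Rpow_mult_distr, E1; apply pow1).
  assert (B1 := bern h n (Rlt_le _ _ Hh)).
  assert (P1 : 0 <= r ^ n) by (apply pow_le; lra).
  assert (P2 : r ^ n <= r' ^ n) by (apply pow_incr; lra).
  assert (P3 : 0 <= INR n) by apply pos_INR.
  assert (I1 : (1 + INR n * h) * r' ^ n <= 1).
  { apply Rle_trans with ((1 + h) ^ n * r' ^ n).
    apply Rmult_le_compat_r; [apply pow_le; lra| exact B1]. rewrite Rmult_comm, E2; lra. }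
  assert (I2 : INR n + 1 <= (1 + / h) * (1 + INR n * h)).
  { replace ((1 + / h) * (1 + INR n * h)) with (1 + INR n * h + / h + INR n) by (field; lra).
    assert (0 < / h) by (apply Rinv_0_lt_compat; lra).
    assert (0 <= INR n * h) by (apply Rmult_le_pos; lra). lra. }
  split. { apply Rmult_le_pos; lra. }
  apply Rle_trans with ((INR n + 1) * r' ^ n). { apply Rmult_le_compat_l; lra. }
  apply Rle_trans with ((1 + / h) * (1 + INR n * h) * r' ^ n).
  { apply Rmult_le_compat_r; [apply pow_le; lra| exact I2]. }
  rewrite Rmult_assoc.
  assert (0 < / h) by (apply Rinv_0_lt_compat; lra).
  rewrite <- (Rmult_1_r (1 + / h)) at 2. apply Rmult_le_compat_l; lra.
Qed.

Lemma sqrt_lt1 x : 0 <= x < 1 -> 0 <= sqrt x < 1.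
Proof.
  intros H. split. apply sqrt_pos. rewrite <- sqrt_1. apply sqrt_lt_1; lra.
Qed.

Lemma cube_geom rho C : 0 <= rho < 1 -> ev_small (fun n => C * ((INR n + 1) ^ 3 * rho ^ n)).
Proof.
  intros Hrho eps Heps.
  set (r := sqrt (sqrt rho)).
  assert (Hs := sqrt_lt1 rho Hrho).
  assert (Hr := sqrt_lt1 (sqrt rho) Hs).
  fold r in Hr.
  assert (Er : rho = (r ^ 2) ^ 2).
  { unfold r. rewrite pow2_sqrt by lra. rewrite pow2_sqrt; lra. }
  destruct (lin_bound r Hr) as [B HB].
  assert (HB0 : 0 <= B) by (specialize (HB 0%nat); lra).
  set (C' := Rabs C * B ^ 3 + 1).
  assert (HC' : 0 < C') by (unfold C'; assert (0 <= Rabs C) by apply Rabs_pos;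
    assert (0 <= B^3) by (apply pow_le; lra); nra).
  assert (Hr' : Rabs r < 1) by (rewrite Rabs_pos_eq; lra).
  destruct (pow_lt_1_zero r Hr' (eps / C')) as [N HN].
  { apply Rdiv_lt_0_compat; lra. }
  exists N. intros n Hn. specialize (HN n Hn). rewrite Rabs_pos_eq in HN by (apply pow_le; lra).
  assert (Eq : (INR n + 1) ^ 3 * rho ^ n = ((INR n + 1) * r ^ n) ^ 3 * r ^ n).
  { rewrite Er. assert (E4 : ((r ^ 2) ^ 2) ^ n = (r ^ n) ^ 4).
    { rewrite <- !pow_mult. f_equal. lia. }
    rewrite E4. ring. }
  rewrite Eq.
  specialize (HB n).
  assert (X1 : ((INR n + 1) * r ^ n) ^ 3 <= B ^ 3) by (apply pow_incr; lra).
  assert (X0 : 0 <= ((INR n + 1) * r ^ n) ^ 3) by (apply pow_le; lra).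
  assert (X2 : 0 <= r ^ n) by (apply pow_le; lra).
  apply Rle_lt_trans with (Rabs C * (B ^ 3 * r ^ n)).
  { apply Rle_trans with (Rabs C * (((INR n + 1) * r ^ n) ^ 3 * r ^ n)).
    - set (w := ((INR n + 1) * r ^ n) ^ 3 * r ^ n).
      assert (0 <= w) by (unfold w; apply Rmult_le_pos; assumption).
      rewrite (Rmult_comm C), (Rmult_comm (Rabs C)). apply Rmult_le_compat_l. assumption. apply Rle_abs.
    - apply Rmult_le_compat_l. apply Rabs_pos. apply Rmult_le_compat_r; assumption. }
  apply Rle_lt_trans with (C' * r ^ n).
  { unfold C'. assert (0 <= Rabs C) by apply Rabs_pos. nra. }
  apply Rmult_lt_reg_l with (/ C'). apply Rinv_0_lt_compat; lra.
  rewrite <- Rmult_assoc, Rinv_l by lra. unfold Rdiv in HN. lra.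
Qed.

Lemma inv_small C : ev_small (fun n => C / (INR n + 1)).
Proof.
  intros eps Heps. destruct (INR_unbounded (Rabs C / eps)) as [N HN].
  exists N. intros n Hn. apply le_INR in Hn.
  assert (0 <= INR N) by apply pos_INR.
  assert (Hp : 0 < INR n + 1) by lra.
  apply Rle_lt_trans with (Rabs C / (INR n + 1)).
  { unfold Rdiv. apply Rmult_le_compat_r. left; apply Rinv_0_lt_compat; lra. apply Rle_abs. }
  apply Rmult_lt_reg_r with (INR n + 1). lra.
  unfold Rdiv. rewrite Rmult_assoc, Rinv_l by lra. rewrite Rmult_1_r.
  apply Rmult_lt_reg_l with (/ eps). apply Rinv_0_lt_compat; lra.
  assert (Rabs C / eps < INR n + 1) by lra. unfold Rdiv in H0.
  rewrite <- Rmult_assoc, Rinv_l by lra. lra.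
Qed.

Lemma ev_small_plus E1 E2 : ev_small E1 -> ev_small E2 -> ev_small (fun n => E1 n + E2 n).
Proof.
  intros H1 H2 eps Heps.
  destruct (H1 (eps/2)) as [N1 HN1]; [lra|].
  destruct (H2 (eps/2)) as [N2 HN2]; [lra|].
  exists (max N1 N2). intros n Hn.
  assert (A1 := HN1 n ltac:(lia)). assert (A2 := HN2 n ltac:(lia)). lra.
Qed.

Lemma unif_from_bound f g (Sx : R -> Prop) E : ev_small E ->
  (exists N0, forall n x, (N0 <= n)%nat -> Sx x -> Rabs (f n x - g x) <= E n) ->
  unif_cv_on f g Sx.
Proof.
  intros HE [N0 HN0] eps Heps. destruct (HE eps Heps) as [N HN].
  exists (max N N0). intros n x Hn Hx.
  eapply Rle_lt_trans. apply HN0; [lia|exact Hx]. apply HN; lia.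
Qed.

Lemma sqrt_diff a b : 0 < b -> Rabs (sqrt a - sqrt b) <= Rabs (a - b) / sqrt b.
Proof.
  intros Hb. assert (Hsb : 0 < sqrt b) by (apply sqrt_lt_R0; lra).
  destruct (Rle_lt_dec a 0) as [Ha|Ha].
  - rewrite sqrt_neg_0 by lra. rewrite Rminus_0_l, Rabs_Ropp, Rabs_pos_eq by lra.
    rewrite Rabs_left1 by lra.
    apply Rmult_le_reg_r with (sqrt b). lra.
    unfold Rdiv. rewrite Rmult_assoc, Rinv_l by lra. 
    assert (sqrt b * sqrt b = b) by (apply sqrt_sqrt; lra). lra.
  - assert (Hsa : 0 < sqrt a) by (apply sqrt_lt_R0; lra).
    assert (E : sqrt a - sqrt b = (a - b) / (sqrt a + sqrt b)).
    { rewrite <- (sqrt_sqrt a) at 2 by lra. rewrite <- (sqrt_sqrt b) at 2 by lra. field. lra. }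
    rewrite E. unfold Rdiv. rewrite Rabs_mult, Rabs_inv, (Rabs_pos_eq (sqrt a + sqrt b)) by lra.
    apply Rmult_le_compat_l. apply Rabs_pos.
    apply Rinv_le_contravar; lra.
Qed.

Lemma err_main D A K : 1 <= A -> 0 < K ->
  Rabs (sqrt D / A - K) <= Rabs (D - K ^ 2 * A ^ 2) / (K * A ^ 2).
Proof.
  intros HA HK.
  assert (E1 : sqrt D / A - K = (sqrt D - sqrt ((K * A) ^ 2)) / A).
  { rewrite sqrt_pow2 by nra. field. lra. }
  rewrite E1. unfold Rdiv at 1. rewrite Rabs_mult, Rabs_inv, (Rabs_pos_eq A) by lra.
  assert (HKA : 0 < (K * A) ^ 2) by (apply pow_lt; nra).
  eapply Rle_trans. apply Rmult_le_compat_r. left; apply Rinv_0_lt_compat; lra.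
  apply sqrt_diff. exact HKA.
  rewrite sqrt_pow2 by nra. rewrite Rpow_mult_distr.
  right. field. lra.
Qed.

Lemma At_form n t : At n t = 1 + t ^ n * t * ((INR n + 1) * (t - 1) - 1).
Proof. unfold At. cbv zeta. ring. Qed.


Lemma div_le_compat a b c d : 0 <= a <= b -> 0 < d <= c -> a / c <= b / d.
Proof.
  intros [Ha Hab] [Hd Hdc]. unfold Rdiv. apply Rmult_le_compat; try lra.
  left; apply Rinv_0_lt_compat; lra. apply Rinv_le_contravar; lra.
Qed.

Lemma final2 X S t tau m c1 c0 M At' sg :
  1 < tau -> tau <= t -> 1 <= S -> / S <= sg -> 1 <= m -> 2 <= m * (tau - 1) ->
  S * m * (t - 1) / 2 <= At' -> Rabs X <= 1 + S * c1 + S ^ 2 * c0 ->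
  0 <= c1 <= 110 * m ^ 3 * M ^ 3 -> 0 <= c0 <= 5 * m * M ^ 4 -> 1 <= M ->
  Rabs X / ((t - 1) * At' ^ 2) <= 4 / (tau - 1) ^ 3 * ((1 + 110 * M ^ 3) * (m ^ 3 * sg) + 5 * M ^ 4 / m).
Proof.
  intros Htau Ht HS Hsg Hm Hmt HA HX Hc1 Hc0 HM.
  assert (Ht1 : 0 < t - 1) by lra.
  assert (HDn : 0 < (t - 1) * (S * m * (t - 1) / 2) ^ 2).
  { apply Rmult_lt_0_compat. lra. apply pow_lt. apply Rmult_lt_0_compat; [|lra]. apply Rmult_lt_0_compat; nra. }
  assert (HSm : 0 < S * m * (t - 1) / 2) by (apply Rmult_lt_0_compat; [|lra]; apply Rmult_lt_0_compat; nra).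
  eapply Rle_trans.
  { apply div_le_compat. split. apply Rabs_pos. exact HX. split. exact HDn.
    apply Rmult_le_compat_l. lra. apply pow_incr. lra. }
  set (iS := / S).
  assert (HiS : 0 < iS <= 1) by (unfold iS; split; [apply Rinv_0_lt_compat; lra| rewrite <- Rinv_1; apply Rinv_le_contravar; lra]).
  assert (Hsg2 : iS <= sg) by exact Hsg.
  replace ((1 + S * c1 + S ^ 2 * c0) / ((t - 1) * (S * m * (t - 1) / 2) ^ 2))
    with (4 * (iS ^ 2 + c1 * iS + c0) / (m ^ 2 * (t - 1) ^ 3)) by (unfold iS; field; lra).
  assert (Hpm : 0 < m ^ 2 * (tau - 1) ^ 3) by (apply Rmult_lt_0_compat; apply pow_lt; lra).
  eapply Rle_trans.
  { apply div_le_compat with (b := 4 * (sg + c1 * sg + c0)) (d := m ^ 2 * (tau - 1) ^ 3).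
    split. assert (0 <= iS ^ 2) by (apply pow2_ge_0). nra.
    assert (iS ^ 2 <= iS) by nra. assert (c1 * iS <= c1 * sg) by (apply Rmult_le_compat_l; lra). lra.
    split. exact Hpm. apply Rmult_le_compat_l. apply pow_le; lra. apply pow_incr; lra. }
  replace (4 * (sg + c1 * sg + c0) / (m ^ 2 * (tau - 1) ^ 3)) with
    (4 / (tau - 1) ^ 3 * (sg * (1 + c1) / m ^ 2 + c0 / m ^ 2)) by (field; lra).
  apply Rmult_le_compat_l. { unfold Rdiv; apply Rmult_le_pos. lra. left; apply Rinv_0_lt_compat; apply pow_lt; lra. }
  assert (Hsg0 : 0 <= sg) by lra.
  apply Rplus_le_compat.
  - assert (Hm2 : 1 <= m ^ 2) by nra.
    assert (Hm3 : 1 <= m ^ 3) by nra.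
    apply Rle_trans with (sg * (1 + c1)).
    { unfold Rdiv. rewrite <- (Rmult_1_r (sg * (1 + c1))) at 2. apply Rmult_le_compat_l. nra.
      rewrite <- Rinv_1. apply Rinv_le_contravar; lra. }
    assert (HM3 : 0 <= M ^ 3) by (apply pow_le; lra).
    assert (sg * (1 + c1) <= sg * (m ^ 3 + 110 * M ^ 3 * m ^ 3)).
    { apply Rmult_le_compat_l. lra. nra. }
    nra.
  - replace (5 * M ^ 4 / m) with ((5 * m * M ^ 4) / m ^ 2) by (field; lra).
    unfold Rdiv. apply Rmult_le_compat_r. left; apply Rinv_0_lt_compat; nra. lra.
Qed.


Lemma div_le_self a y : 0 <= a -> 1 <= y -> a / y <= a.
Proof.
  intros Ha Hy. unfold Rdiv. rewrite <- (Rmult_1_r a) at 2. apply Rmult_le_compat_l. lra.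
  rewrite <- Rinv_1. apply Rinv_le_contravar; lra.
Qed.

Lemma case1 rho n x : 0 <= rho < 1 -> x ^ 2 <= rho ->
  Rabs (calK n x - Klim x) <= 144 / (1 - rho) ^ 6 * ((INR n + 1) ^ 3 * rho ^ n).
Proof.
  intros Hr Hx.
  assert (Hx1 : Rabs x < 1).
  { rewrite <- pow2_abs in Hx. assert (0 <= Rabs x) by apply Rabs_pos. nra. }
  unfold Klim. destruct (Rlt_dec (Rabs x) 1) as [_|C]; [|contradiction].
  rewrite calK_eq.
  assert (H1 := id1 n (x ^ 2)).
  rewrite <- As_closed, <- Ps_closed, <- Qs_closed in H1.
  set (t := x ^ 2) in *.
  assert (Ht0 : 0 <= t) by apply pow2_ge_0.
  set (A := As n t) in *. set (P := Ps n t) in *. set (Q := Qs n t) in *.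
  set (pe := peval L1 (INR n) t (t ^ n)) in *.
  assert (HA : 1 <= A) by (apply As_ge1; auto).
  assert (Hu : 0 < 1 - rho <= 1 - t) by lra.
  assert (Hs2 : 1 <= sqrt 2) by (rewrite <- sqrt_1; apply sqrt_le_1_alt; lra).
  assert (HK : 1 <= sqrt 2 / (1 - t)).
  { apply Rle_trans with (sqrt 2). exact Hs2. unfold Rdiv.
    rewrite <- (Rmult_1_r (sqrt 2)) at 1. apply Rmult_le_compat_l. lra.
    rewrite <- Rinv_1. apply Rinv_le_contravar; lra. }
  eapply Rle_trans. apply err_main; lra.
  assert (HKA : 1 <= sqrt 2 / (1 - t) * A ^ 2).
  { assert (1 <= A ^ 2) by nra. nra. }
  eapply Rle_trans.
  { apply div_le_self. apply Rabs_pos. exact HKA. }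
  replace ((sqrt 2 / (1 - t)) ^ 2) with (sqrt 2 ^ 2 / (1 - t) ^ 2) by (field; lra).
  rewrite pow2_sqrt by lra.
  replace (Q * A - t * P ^ 2 - 2 / (1 - t) ^ 2 * A ^ 2) with
    ((Q * (1 - t) ^ 4 * (A * (1 - t) ^ 2) - t * (P * (1 - t) ^ 3) ^ 2 - 2 * (A * (1 - t) ^ 2) ^ 2) / (1 - t) ^ 6)
    by (field; lra).
  rewrite H1.
  assert (Hpe : Rabs pe <= 144 * (INR n + 1) ^ 3).
  { destruct sabs_vals as [S1 _]. destruct deg_vals as [D1 _].
    assert (B := peval_bound L1 (INR n) t (t ^ n) 1 3 4 (pos_INR n) ltac:(lra)
      ltac:(rewrite Rabs_pos_eq; lra) ltac:(rewrite Rabs_pos_eq by (apply pow_le; lra); rewrite <- (pow1 n); apply pow_incr; lra) D1).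
    rewrite S1, pow1 in B. fold pe in B. lra. }
  assert (Htn : 0 <= t ^ n <= rho ^ n) by (split; [apply pow_le; lra| apply pow_incr; lra]).
  assert (Hu6 : (1 - rho) ^ 6 <= (1 - t) ^ 6) by (apply pow_incr; lra).
  assert (Hu6' : 0 < (1 - rho) ^ 6) by (apply pow_lt; lra).
  unfold Rdiv. rewrite !Rabs_mult, Rabs_inv, (Rabs_pos_eq (t ^ n)), (Rabs_pos_eq ((1 - t) ^ 6)) by (apply pow_le; lra).
  assert (0 <= Rabs pe) by apply Rabs_pos.
  assert (0 <= (INR n + 1) ^ 3) by (apply pow_le; assert (0 <= INR n) by apply pos_INR; lra).
  apply Rle_trans with (rho ^ n * (144 * (INR n + 1) ^ 3) * / (1 - rho) ^ 6).
  { apply Rmult_le_compat. apply Rmult_le_pos; lra. left; apply Rinv_0_lt_compat; apply pow_lt; lra.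
    apply Rmult_le_compat; lra. apply Rinv_le_contravar; lra. }
  right. ring.
Qed.


Lemma case2 tau M n x : 1 < tau -> tau <= x ^ 2 <= M -> 2 <= (INR n + 1) * (tau - 1) ->
  Rabs (calK n x - Klim x) <=
  4 / (tau - 1) ^ 3 * ((1 + 110 * M ^ 3) * ((INR n + 1) ^ 3 * (/ tau) ^ n) + 5 * M ^ 4 / (INR n + 1)).
Proof.
  intros Htau Hx Hn.
  assert (Hx1 : ~ Rabs x < 1).
  { rewrite <- pow2_abs in Hx. assert (0 <= Rabs x) by apply Rabs_pos. nra. }
  unfold Klim. destruct (Rlt_dec (Rabs x) 1) as [C|_]; [contradiction|].
  rewrite calK_eq.
  assert (H2 := id2 n (x ^ 2)).
  rewrite <- As_closed, <- Ps_closed, <- Qs_closed in H2.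
  assert (HAt := At_form n (x ^ 2)). rewrite <- As_closed in HAt.
  set (t := x ^ 2) in *.
  set (A := As n t) in *. set (P := Ps n t) in *. set (Q := Qs n t) in *.
  set (pe1 := peval L21 (INR n) t 1) in *.
  set (pe0 := peval L20 (INR n) t 1) in *.
  assert (Ht1 : 0 < t - 1) by lra.
  assert (HA : 1 <= A) by (apply As_ge1; lra).
  assert (HK : 0 < 1 / (t - 1)) by (apply Rdiv_lt_0_compat; lra).
  eapply Rle_trans. apply err_main; lra.
  set (X := Q * (1 - t) ^ 4 * (A * (1 - t) ^ 2) - t * (P * (1 - t) ^ 3) ^ 2 - (A * (1 - t) ^ 2) ^ 2) in *.
  assert (E : Rabs (Q * A - t * P ^ 2 - (1 / (t - 1)) ^ 2 * A ^ 2) / (1 / (t - 1) * A ^ 2)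
            = Rabs X / ((t - 1) * (A * (1 - t) ^ 2) ^ 2)).
  { replace (Q * A - t * P ^ 2 - (1 / (t - 1)) ^ 2 * A ^ 2) with (X / (t - 1) ^ 6)
      by (unfold X; field; lra).
    assert (0 < (t - 1) ^ 6) by (apply pow_lt; lra).
    assert (R6 : Rabs (X / (t - 1) ^ 6) = Rabs X / (t - 1) ^ 6).
    { unfold Rdiv. rewrite Rabs_mult, Rabs_inv, (Rabs_pos_eq ((t - 1) ^ 6)) by lra. reflexivity. }
    rewrite R6.
    field. split; lra. }
  rewrite E. clear E.
  assert (HS : 1 <= t ^ n) by (rewrite <- (pow1 n); apply pow_incr; lra).
  assert (Hm : 0 <= INR n) by apply pos_INR.
  assert (HM : 1 <= M) by lra.
  destruct sabs_vals as [_ [S20 S21]]. destruct deg_vals as [_ [D20 D21]].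
  assert (Habs_t : Rabs t <= M) by (rewrite Rabs_pos_eq; lra).
  assert (B1 := peval_bound L21 (INR n) t 1 M 3 3 Hm HM Habs_t ltac:(rewrite Rabs_R1; lra) D21).
  assert (B0 := peval_bound L20 (INR n) t 1 M 1 4 Hm HM Habs_t ltac:(rewrite Rabs_R1; lra) D20).
  rewrite S21 in B1. rewrite S20 in B0. fold pe1 in B1. fold pe0 in B0. rewrite pow_1 in B0.
  apply final2 with (S := t ^ n) (c1 := Rabs pe1) (c0 := Rabs pe0); try lra.
  - rewrite pow_inv. apply Rinv_le_contravar. apply pow_lt; lra. apply pow_incr; lra.
  - rewrite HAt.
    assert (Hmt : (INR n + 1) * (tau - 1) <= (INR n + 1) * (t - 1)) by (apply Rmult_le_compat_l; lra).
    assert (0 <= t ^ n * (INR n + 1) * (t - 1) / 2).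
    { apply Rmult_le_pos; [|lra]. apply Rmult_le_pos; [|lra]. apply Rmult_le_pos; lra. }
    assert (Hq : (INR n + 1) * (t - 1) / 2 <= t * ((INR n + 1) * (t - 1) - 1)) by nra.
    assert (t ^ n * ((INR n + 1) * (t - 1) / 2) <= t ^ n * (t * ((INR n + 1) * (t - 1) - 1)))
      by (apply Rmult_le_compat_l; lra).
    lra.
  - rewrite H2. eapply Rle_trans. apply Rabs_triang. eapply Rle_trans.
    apply Rplus_le_compat_r. apply Rabs_triang.
    rewrite Rabs_R1, !Rabs_mult, (Rabs_pos_eq (t ^ n)), (Rabs_pos_eq ((t ^ n) ^ 2)) by (apply pow_le; lra). lra.
  - split. apply Rabs_pos. lra.
  - split. apply Rabs_pos. lra.
Qed.


Lemma unif1 rho (Sx : R -> Prop) : 0 <= rho < 1 -> (forall x, Sx x -> x ^ 2 <= rho) ->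
  unif_cv_on calK Klim Sx.
Proof.
  intros Hr HS.
  apply unif_from_bound with (E := fun n => 144 / (1 - rho) ^ 6 * ((INR n + 1) ^ 3 * rho ^ n)).
  - apply cube_geom; auto.
  - exists 0%nat. intros n x _ Hx. apply case1; auto.
Qed.

Lemma unif2 tau M (Sx : R -> Prop) : 1 < tau -> (forall x, Sx x -> tau <= x ^ 2 <= M) ->
  unif_cv_on calK Klim Sx.
Proof.
  intros Ht HS.
  apply unif_from_bound with (E := fun n =>
    4 / (tau - 1) ^ 3 * (1 + 110 * M ^ 3) * ((INR n + 1) ^ 3 * (/ tau) ^ n)
    + (4 / (tau - 1) ^ 3 * (5 * M ^ 4)) / (INR n + 1)).
  - apply ev_small_plus. apply cube_geom.
    split. left; apply Rinv_0_lt_compat; lra. rewrite <- Rinv_1. apply Rinv_lt_contravar; lra.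
    apply inv_small.
  - destruct (INR_unbounded (2 / (tau - 1))) as [N HN].
    exists N. intros n x Hn Hx.
    assert (Hn' : INR N <= INR n) by (apply le_INR; lia).
    assert (H2 : 2 <= (INR n + 1) * (tau - 1)).
    { assert (2 / (tau - 1) * (tau - 1) = 2) by (field; lra).
      assert (0 <= INR N) by apply pos_INR. nra. }
    eapply Rle_trans. apply (case2 tau M n x Ht (HS x Hx) H2).
    right. assert (0 <= INR n) by apply pos_INR. field. split; lra.
Qed.

Lemma As1 n : As n 1 = (INR n + 1) * (INR n + 2) / 2.
Proof.
  induction n. unfold As; simpl; field.
  change (As (S n) 1) with (As n 1 + INR (S n + 1) * 1 ^ S n).
  rewrite IHn, pow1, plus_INR, !S_INR. simpl INR. field.
Qed.
Lemma Ps1 n : Ps n 1 = INR n * (INR n + 1) * (INR n + 2) / 3.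
Proof.
  induction n. unfold Ps; simpl; field.
  change (Ps (S n) 1) with (Ps n 1 + INR (S n) * INR (S n + 1) * 1 ^ (S n - 1)).
  rewrite IHn, pow1, plus_INR, !S_INR. simpl INR. field.
Qed.
Lemma Qs1 n : Qs n 1 = INR n * (INR n + 1) * (INR n + 2) * (3 * INR n + 1) / 12.
Proof.
  induction n. unfold Qs; simpl; field.
  change (Qs (S n) 1) with (Qs n 1 + INR (S n) ^ 2 * INR (S n + 1) * 1 ^ (S n - 1)).
  rewrite IHn, pow1, plus_INR, !S_INR. simpl INR. field.
Qed.

Lemma at_one n x : x ^ 2 = 1 -> calK n x = / 3 * sqrt (INR n * (INR n + 3) / 2).
Proof.
  intros Hx. rewrite calK_eq, Hx, As1, Ps1, Qs1.
  assert (Hm : 0 <= INR n) by apply pos_INR.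
  set (A := (INR n + 1) * (INR n + 2) / 2).
  assert (HA : 0 < A) by (unfold A; nra).
  replace (INR n * (INR n + 1) * (INR n + 2) * (3 * INR n + 1) / 12 * A -
     1 * (INR n * (INR n + 1) * (INR n + 2) / 3) ^ 2)
    with (A ^ 2 * ((/ 3) ^ 2 * (INR n * (INR n + 3) / 2))) by (unfold A; field).
  rewrite sqrt_mult_alt by (apply pow2_ge_0).
  rewrite sqrt_pow2 by lra.
  rewrite sqrt_mult_alt by (apply pow2_ge_0).
  rewrite sqrt_pow2 by lra.
  field. lra.
Qed.

Theorem theorem3 :
  (forall x, Rabs x <> 1 -> Un_cv (fun n => calK n x) (Klim x)) /\
  loc_unif_cv_on calK Klim (fun x => Rabs x < 1) /\
  loc_unif_cv_on calK Klim (fun x => Rabs x > 1) /\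
  (forall n : nat,
     calK n 1 = / 3 * sqrt (INR n * (INR n + 3) / 2) /\
     calK n (-1) = / 3 * sqrt (INR n * (INR n + 3) / 2)).
Proof.
  split; [|split; [|split]].
  - intros x Hx eps Heps.
    assert (Hax := Rabs_pos x).
    destruct (Rlt_le_dec (Rabs x) 1) as [H1|H1].
    + assert (U := unif1 (Rabs x ^ 2) (fun y => y = x) ltac:(split; [apply pow2_ge_0|nra])
        ltac:(intros y ->; rewrite <- (pow2_abs x); lra)).
      destruct (U eps Heps) as [N HN]. exists N. intros n Hn. unfold R_dist. apply HN; [lia|reflexivity].
    + assert (H1' : 1 < Rabs x) by (destruct H1 as [H1|H1]; [exact H1| exfalso; apply Hx; symmetry; exact H1]).
      assert (H2' : 1 < Rabs x ^ 2).
      { assert (1 * 1 < Rabs x * Rabs x) by (apply Rmult_le_0_lt_compat; lra). simpl. lra. }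
      assert (U := unif2 (Rabs x ^ 2) (Rabs x ^ 2) (fun y => y = x) H2'
        ltac:(intros y ->; rewrite <- (pow2_abs x); lra)).
      destruct (U eps Heps) as [N HN]. exists N. intros n Hn. unfold R_dist. apply HN; [lia|reflexivity].
  - intros a b Hab. destruct (Rle_lt_dec a b) as [Hle|Hlt].
    + assert (Ha := Hab a ltac:(lra)). assert (Hb := Hab b ltac:(lra)).
      apply unif1 with (rho := Rmax (a ^ 2) (b ^ 2)).
      * split. apply Rle_trans with (a ^ 2). apply pow2_ge_0. apply Rmax_l.
        apply Rmax_lub_lt; rewrite <- pow2_abs; assert (0 <= Rabs a) by apply Rabs_pos;
          assert (0 <= Rabs b) by apply Rabs_pos; nra.
      * intros x [H1 H2]. destruct (Rle_lt_dec 0 x).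
        apply Rle_trans with (b ^ 2). nra. apply Rmax_r.
        apply Rle_trans with (a ^ 2). nra. apply Rmax_l.
    + intros eps _. exists 0%nat. intros n x _ [H1 H2]. lra.
  - intros a b Hab. destruct (Rle_lt_dec a b) as [Hle|Hlt].
    + assert (Ha := Hab a ltac:(lra)). assert (Hb := Hab b ltac:(lra)).
      destruct (Rlt_le_dec 1 a) as [Ha1|Ha1].
      * apply unif2 with (tau := a ^ 2) (M := b ^ 2). nra.
        intros x [H1 H2]. split; nra.
      * assert (Hb1 : b < -1).
        { destruct (Rlt_le_dec b (-1)) as [Hb1|Hb1]; auto.
          destruct (Rle_lt_dec 0 b).
          - assert (H0 := Hab 0 ltac:(split; [|lra]; unfold Rabs in Ha; destruct Rcase_abs; lra)).
            rewrite Rabs_R0 in H0. lra.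
          - unfold Rabs in Hb; destruct Rcase_abs in Hb; lra. }
        apply unif2 with (tau := b ^ 2) (M := a ^ 2). nra.
        intros x [H1 H2]. split; nra.
    + intros eps _. exists 0%nat. intros n x _ [H1 H2]. lra.
  - intros n. split; apply at_one; ring.
Qed.
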